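(* Let $K$ be an algebraically closed field of characteristic $0$ and let $G=\mathrm{SL}(2,K)$, regarded as the affine variety $\{ad-bc=1\}\subset \mathbb{A}^4_{a,b,c,d}$. For every $n\ge 1$, every non-constant regular function $f$ on $G^n$ omits no values in $K$, i.e. $f(G^n)=K$. *)

(* Defs.v *)
From HB Require Import structures.
From mathcomp Require Import all_boot all_algebra all_field.
From mathcomp Require Import mpoly.
Set Implicit Arguments. Unset Strict Implicit. Unset Printing Implicit Defensive.
Import GRing.Theory.
Local Open Scope ring_scope.

(* A point of G^n = SL(2,K)^n is encoded as an n x 4 matrix X whose i-th row
   (X i 0, X i 1, X i 2, X i 3) = (a, b, c, d) satisfies a d - b c = 1. *)
Definition in_SL2n (K : comRingType) (n : nat) (X : 'M[K]_(n, 4)) : Prop :=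
  forall i : 'I_n, X i 0 * X i 3 - X i 1 * X i 2 = 1.

(* A regular function on the affine variety G^n ⊂ A^{4n} is the restriction of
   a polynomial in the 4n ambient coordinates; its value at X. *)
Definition regfun_eval (K : comRingType) (n : nat) (p : {mpoly K[n * 4]})
  (X : 'M[K]_(n, 4)) : K := p.@[fun k => (mxvec X) 0 k].

(* Main.v *)
Require Import Defs.
From HB Require Import structures.
From mathcomp Require Import all_boot all_algebra all_field.
From mathcomp Require Import mpoly.
From mathcomp Require Import ring.
Set Implicit Arguments. Unset Strict Implicit.
Import GRing.Theory.
Local Open Scope ring_scope.

Definition elt (R : comRingType) (u s w r : R) (j : 'I_4) : R :=
  [:: 1 + s*w; (1+s*w)*r + s; u*(1+s*w) + w; u*((1+s*w)*r+s) + w*r + 1]`_j.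

Lemma elt_det (R : comRingType) (u s w r : R) :
  elt u s w r 0 * elt u s w r 3 - elt u s w r 1 * elt u s w r 2 = 1.
Proof. rewrite /elt /=. ring. Qed.

Lemma elt_rmorph (R S : comRingType) (f : {rmorphism R -> S}) u s w r j :
  f (elt u s w r j) = elt (f u) (f s) (f w) (f r) j.
Proof.
case: j => [[|[|[|[|j]]]] Hj];
  by rewrite /elt /= ?nth_nil ?(rmorphD, rmorphM, rmorph1, rmorph0).
Qed.

Definition cu (K : fieldType) (c : K) : K := if c == 0 then -1 else 0.

Lemma dec_ok (K : fieldType) (a b c d : K) : a*d - b*c = 1 ->
  let u := cu c in let w := c - u * a in
  let s := (a - 1) / w in let r := (d - u * b - 1) / w in
  [/\ elt u s w r 0 = a, elt u s w r 1 = b, elt u s w r 2 = c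
    & elt u s w r 3 = d].
Proof.
move=> h u w s r.
have hc : w != 0.
  rewrite /w /u /cu; case: (eqVneq c 0) => [c0|hc]; last by rewrite mul0r subr0.
  rewrite c0 mulN1r sub0r opprK; apply/eqP => ha; move: h.
  by rewrite ha c0 !mul0r mulr0 subrr => /eqP; rewrite eq_sym oner_eq0.
have E : b * w = a * (d - u * b) - 1.
  by rewrite -h /w; ring.
have h0 : 1 + s * w = a by rewrite /s; field.
have h1 : (1 + s * w) * r + s = b.
  by apply: (mulIf hc); rewrite E /s /r; field.
have h3 : w * r + 1 = d - u * b by rewrite /r; field.
rewrite /elt /=; split.
- exact: h0.
- exact: h1.
- by rewrite h0 /w; ring.
- by rewrite h1 -addrA h3; ring.
Qed.

Section Main.
Variable K : closedFieldType.
Variable n : nat.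

Definition pu (M : 'M[K]_(n, 4)) i := cu (M i 2).
Definition pw (M : 'M[K]_(n, 4)) i := M i 2 - pu M i * M i 0.
Definition ps (M : 'M[K]_(n, 4)) i := (M i 0 - 1) / pw M i.
Definition pr (M : 'M[K]_(n, 4)) i := (M i 3 - pu M i * M i 1 - 1) / pw M i.

Lemma pOK M : in_SL2n M -> forall i j, elt (pu M i) (ps M i) (pw M i) (pr M i) j = M i j.
Proof.
move=> hM i j.
have [e0 e1 e2 e3] := dec_ok (hM i).
case: j => [[|[|[|[|j]]]] Hj].
- by rewrite (_ : Ordinal Hj = 0) //; apply: val_inj.
- by rewrite (_ : Ordinal Hj = 1) //; apply: val_inj.
- by rewrite (_ : Ordinal Hj = 2) //; apply: val_inj.
- by rewrite (_ : Ordinal Hj = 3) //; apply: val_inj.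
- by [].
Qed.

Definition lin (a b : K) : {poly K} := a%:P + 'X * (b - a)%:P.
Definition lt (t a b : K) : K := a + t * (b - a).

Lemma lin_eval t a b : (lin a b).[t] = lt t a b.
Proof. by rewrite /lin /lt hornerD hornerC hornerM hornerX hornerC. Qed.

Variables X Y : 'M[K]_(n, 4).

Definition P : 'M[{poly K}]_(n, 4) :=
  \matrix_(i, j) elt (lin (pu X i) (pu Y i)) (lin (ps X i) (ps Y i))
                      (lin (pw X i) (pw Y i)) (lin (pr X i) (pr Y i)) j.
Definition Mt t : 'M[K]_(n, 4) :=
  \matrix_(i, j) elt (lt t (pu X i) (pu Y i)) (lt t (ps X i) (ps Y i))
                      (lt t (pw X i) (pw Y i)) (lt t (pr X i) (pr Y i)) j.

Lemma mapP t : map_mx (fun x => x.[t]) P = Mt t.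
Proof.
apply/matrixP => i j; rewrite !mxE -!lin_eval.
case: j => [[|[|[|[|j]]]] Hj];
  by rewrite /elt /= ?nth_nil ?(hornerD, hornerM, hornerC, horner0).
Qed.

Lemma Mt0 : in_SL2n X -> Mt 0 = X.
Proof.
move=> hX; apply/matrixP => i j; rewrite mxE /lt !mul0r !addr0.
exact: pOK.
Qed.

Lemma Mt1 : in_SL2n Y -> Mt 1 = Y.
Proof.
have lt1 a b : lt 1 a b = b by rewrite /lt mul1r addrC subrK.
move=> hY; apply/matrixP => i j; rewrite mxE !lt1.
exact: pOK.
Qed.

Lemma Mt_SL t : in_SL2n (Mt t).
Proof. by move=> i; rewrite !mxE; apply: elt_det. Qed.

Lemma key (p : {mpoly K[n * 4]}) t :
  (mmap (@polyC K) (fun k => mxvec P 0 k) p).[t] = regfun_eval p (Mt t).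
Proof.
rewrite /regfun_eval -mapP -map_mxvec /mmap mevalE horner_sum.
apply: eq_bigr => m _; rewrite hornerM hornerC /mmap1 horner_prod.
congr (_ * _); apply: eq_bigr => i _; by rewrite horner_exp mxE.
Qed.

End Main.

Theorem lemma2p1 (K : closedFieldType) (hK : [pchar K] =i pred0)
  (n : nat) (hn : (1 <= n)%N) (p : {mpoly K[n * 4]}) :
  (exists X Y : 'M[K]_(n, 4),
     [/\ in_SL2n X, in_SL2n Y & regfun_eval p X <> regfun_eval p Y]) ->
  forall c : K, exists X : 'M[K]_(n, 4), in_SL2n X /\ regfun_eval p X = c.
Proof.
move=> [X [Y [hX hY hne]]] c.
set q := mmap (@polyC K) (fun k => mxvec (P X Y) 0 k) p.
have hq : q.[0] != q.[1].
  by rewrite !key Mt0 // Mt1 //; apply/eqP.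
have hs : size (q - c%:P) != 1.
  apply/negP => /size_poly1P [k _ hk]; move: hq.
  by rewrite (_ : q = (k + c)%:P) ?hornerC ?eqxx // -[q](subrK c%:P) hk polyCD.
have [t ht] := closed_rootP _ hs.
exists (Mt X Y t); split; first exact: Mt_SL.
rewrite -key; apply/eqP; rewrite -subr_eq0.
by move: ht; rewrite /root hornerD hornerN hornerC.
Qed.
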